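(* Let $d\ge 2$ and let $\varphi:[0,\infty)\to[0,1]$ be the Laplace transform of a strictly positive random variable, continuous and strictly decreasing with $\varphi(0)=1$ and $\lim_{t\to\infty}\varphi(t)=0$, and let $C(u_1,\dots,u_d)=\varphi\big(\sum_{i=1}^d\varphi^{-1}(u_i)\big)$ be the associated Archimedean copula. If $\varphi$ is slowly varying at $\infty$, then for every $w=(w_1,\dots,w_d)\in\mathbb{R}_+^d$, $$\lim_{u\downarrow 0}\frac{C(uw_1,\dots,uw_d)}{u}=\min\{w_1,\dots,w_d\}.$$
   Context: A measurable function $f>0$ is slowly varying at $\infty$ if $f(tx)/f(t)\to 1$ as $t\to\infty$ for every $x>0$. *)

(* Defs.v *)
From HB Require Import structures.
From mathcomp Require Import all_boot all_order all_algebra.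
From mathcomp Require Import all_classical all_reals all_analysis.
Set Implicit Arguments. Unset Strict Implicit. Unset Printing Implicit Defensive.
Import Order.TTheory GRing.Theory Num.Theory.
Import numFieldNormedType.Exports.
Local Open Scope classical_set_scope.
Local Open Scope ring_scope.

Definition laplace {R : realType} (P : probability R R) (t : R) : R :=
  fine (\int[P]_x (expR (- (t * x)))%:E)%E.

Definition slowly_varying {R : realType} (f : R -> R) : Prop :=
  [/\ measurable_fun (`]0, +oo[ : set R) f,
      (forall t, 0 < t -> 0 < f t) &
      forall x, 0 < x -> f (t * x) / f t @[t --> +oo] --> (1 : R)].

(* generalized inverse of phi on [0,1]: inf {t >= 0 | phi t <= u},
   valued in the extended reals (= +oo when u = 0, the usual convention) *)
Definition phi_inv {R : realType} (phi : R -> R) (u : R) : \bar R :=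
  ereal_inf [set t%:E | t in [set t : R | 0 <= t /\ phi t <= u]].

(* phi extended to [0, +oo] with phi(+oo) = lim phi = 0 *)
Definition phi_ext {R : realType} (phi : R -> R) (e : \bar R) : R :=
  match e with
  | r%:E => phi r
  | +oo%E => 0
  | -oo%E => 1
  end.

Definition arch_copula {R : realType} (phi : R -> R) (d : nat)
    (u : 'I_d -> R) : R :=
  phi_ext phi (\sum_(i < d) phi_inv phi (u i))%E.

(* min{w_1,...,w_d} (for d >= 1) *)
Definition minv {R : realType} (d : nat) (w : 'I_d -> R) : R :=
  fine (\big[mine/+oo%E]_(i < d) (w i)%:E)%E.

(* Main.v *)
Require Import Defs.
From HB Require Import structures.
From mathcomp Require Import all_boot all_order all_algebra.
From mathcomp Require Import all_classical all_reals all_analysis.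
From mathcomp Require Import ring lra.
Import Order.TTheory GRing.Theory Num.Theory.
Import numFieldNormedType.Exports.
Local Open Scope classical_set_scope.
Local Open Scope ring_scope.
Set Implicit Arguments. Unset Strict Implicit.

Lemma minvP (R : realType) (d : nat) (w : 'I_d -> R) (i0 : 'I_d) :
  exists j, minv w = w j /\ forall i, w j <= w i.
Proof.
rewrite /minv.
rewrite (@bigmin_eq_arg _ _ _ +oo%E i0 predT (fun i => (w i)%:E)) //; last first.
  by move=> i _; exact: leey.
case: arg_minP => // j _ Hj; exists j; split => // i.
by have := Hj i isT; rewrite lee_fin.
Qed.

Lemma mono_le (R : realType) (phi : R -> R) :
  {in `[0, +oo[ &, forall s t, s < t -> phi t < phi s} ->
  forall s t, 0 <= s -> s <= t -> phi t <= phi s.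
Proof.
move=> Hd s t s0 st; rewrite le_eqVlt in st; case/orP: st => [/eqP->//|st].
apply/ltW/Hd => //; rewrite in_itv /= andbT //.
exact: (le_trans s0 (ltW st)).
Qed.

Lemma phi_inv_ge0 (R : realType) (phi : R -> R) v : (0 <= phi_inv phi v)%E.
Proof.
apply: le_ereal_inf_tmp => _ [t [t0 _] <-]; by rewrite lee_fin.
Qed.

Lemma phi_inv0 (R : realType) (phi : R -> R) :
  phi 0 = 1 -> (forall t, 0 < t -> 0 < phi t) -> phi_inv phi 0 = +oo%E.
Proof.
move=> H0 Hp; rewrite /phi_inv.
suff -> : [set t%:E | t in [set t : R | 0 <= t /\ phi t <= 0]] = set0.
  exact: ereal_inf0.
apply/seteqP; split => // _ [t [t0 Ht] _] /=.
move: t0; rewrite le_eqVlt => /orP[/eqP t0|t0].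
  by move: Ht; rewrite -t0 H0 ler10.
by have := Hp t t0; rewrite ltNge Ht.
Qed.

Lemma phi_inv_pos (R : realType) (phi : R -> R) :
  {within `[0, +oo[, continuous phi} ->
  {in `[0, +oo[ &, forall s t, s < t -> phi t < phi s} ->
  phi 0 = 1 -> phi t @[t --> +oo] --> 0 ->
  forall v, 0 < v -> v <= 1 ->
  exists t, [/\ 0 <= t, phi t = v & phi_inv phi v = t%:E].
Proof.
move=> Hc Hd H0 Hl v v0 v1.
have := cvgr_lt 0 Hl v v0 => -[M [Mr HM]].
set T := Num.max M 0 + 1.
have T0 : 0 <= T by rewrite addr_ge0 // le_max lexx orbT.
have HT : phi T < v by apply: HM; rewrite /T ltr_pwDr // le_max lexx.
have [t t0T Ht] : exists2 t, t \in `[0, T] & phi t = v.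
  apply: IVT => //.
    apply: continuous_subspaceW Hc => x /=; rewrite !in_itv /= => /andP[-> _] //.
  rewrite H0 (min_r (ltW (lt_le_trans HT v1))).
  by rewrite (max_l (ltW (lt_le_trans HT v1))) (ltW HT) v1.
move: t0T; rewrite in_itv /= => /andP[t0 _].
exists t; split => //.
apply/le_anti/andP; split.
  by apply: ereal_inf_lbound; exists t => //; split => //; rewrite Ht.
apply: le_ereal_inf_tmp => _ [s [s0 Hs] <-]; rewrite lee_fin.
rewrite leNgt; apply/negP => st.
have := Hd s t; rewrite !in_itv /= andbT s0 t0 => /(_ isT isT st).
by rewrite Ht ltNge Hs.
Qed.

Lemma ge0_neqNy (R : realType) (x : \bar R) : (0 <= x)%E -> x != -oo%E.
Proof. by case: x. Qed.

Unset Implicit Arguments. Set Strict Implicit.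

Theorem theorem2p3 (R : realType) (d : nat) (P : probability R R) :
  (2 <= d)%N ->
  P `]0, +oo[%classic = 1%E ->
  {within `[0, +oo[, continuous (laplace P)} ->
  {in `[0, +oo[ &, forall s t, s < t -> laplace P t < laplace P s} ->
  laplace P 0 = 1 ->
  laplace P t @[t --> +oo] --> 0 ->
  slowly_varying (laplace P) ->
  forall w : 'I_d -> R, (forall i, 0 <= w i) ->
    (fun u => arch_copula (laplace P) (fun i => u * w i) / u) @ 0^'+
      --> minv w.
Proof.
move=> d2 _ Hc Hd H0 Hl [_ Hp Hsv] w w0.
have d0 : (0 < d)%N by apply: leq_trans d2.
have [j [-> Hj]] := @minvP _ _ w (Ordinal d0).
have := w0 j; rewrite le_eqVlt => /orP[/eqP m0|mpos].
  apply: cvg_near_cst; apply: nearW => u.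
  rewrite /arch_copula (bigD1 j) //= -m0 mulr0 phi_inv0 // addye ?mul0r //.
  by apply: ge0_neqNy; apply: sume_ge0 => i _; exact: phi_inv_ge0.
pose phi := laplace P.
pose T v := fine (phi_inv phi v).
pose g u := T (u * w j).
pose W := \sum_i w i.
have wW i : w i <= W by rewrite /W (bigD1 i) //= lerDl sumr_ge0.
have W0 : 0 < W := lt_le_trans mpos (wW j).
have key : forall u, 0 < u -> u < W^-1 -> forall i,
    [/\ 0 <= T (u * w i), phi (T (u * w i)) = u * w i &
        phi_inv phi (u * w i) = (T (u * w i))%:E].
  move=> u u0 uW i; have wi0 : 0 < w i := lt_le_trans mpos (Hj i).
  have [||t [t0 Ht Hi]] := @phi_inv_pos _ phi Hc Hd H0 Hl (u * w i).
  - exact: mulr_gt0.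
  - rewrite -(mulVf (lt0r_neq0 W0)); apply: ler_pM; [exact: ltW|exact: ltW|exact: ltW|exact: wW].
  by rewrite /T Hi /=; split.
have gy : g u @[u --> 0^'+] --> +oo.
  apply/cvgryPge => A.
  pose A' := Num.max A 0 + 1.
  have A'0 : 0 < A' by rewrite /A' ltr_pwDr // le_max lexx orbT.
  have pA : 0 < phi A' := Hp _ A'0.
  near=> u.
  have u0 : 0 < u by near: u; exact: nbhs_right_gt.
  have uW : u < W^-1 by near: u; by apply: nbhs_right_lt; rewrite invr_gt0.
  have [t0 Ht _] := key u u0 uW j.
  apply: (@le_trans _ _ A'); first by rewrite /A' ler_wpDr // le_max lexx.
  rewrite leNgt; apply/negP => lt.
  have := mono_le Hd t0 (ltW lt); rewrite -/phi  Ht leNgt => /negP; apply.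
  rewrite -ltr_pdivlMr //; near: u; exact: nbhs_right_lt (divr_gt0 _ _).
have dR : 0 < d%:R :> R by rewrite ltr0n.
have ratio : (fun u => phi (g u * d%:R) / phi (g u)) @ 0^'+ --> (1:R).
  exact: (cvg_comp _ _ gy (Hsv _ dR)).
apply: (@squeeze_cvgr _ _ _ _ (fun u => w j * (phi (g u * d%:R) / phi (g u)))
   (fun _ => w j)); last first.
- exact: cvg_cst.
- have := cvgM (cvg_cst (w j)) ratio; rewrite mulr1; exact.
near=> u.
have u0 : 0 < u by near: u; exact: nbhs_right_gt.
have uW : u < W^-1 by near: u; by apply: nbhs_right_lt; rewrite invr_gt0.
have K := key u u0 uW.
pose ts i := T (u * w i).
rewrite /arch_copula.
have -> : (\sum_(i < d) phi_inv (laplace P) (u * w i))%E = (\sum_i ts i)%:E.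
  by rewrite -sumEFin; apply: eq_bigr => i _; case: (K i).
rewrite /=.
have tsj i : ts i <= ts j.
  rewrite leNgt; apply/negP => lt.
  have [t0j Hj' _] := K j; have [t0i Hi _] := K i.
  have := Hd (ts j) (ts i); rewrite !in_itv /= !andbT t0j t0i => /(_ isT isT lt).
  by rewrite -/phi /ts Hi Hj' ltr_pM2l // ltNge Hj.
have S1 : ts j <= \sum_i ts i.
  by rewrite (bigD1 j) //= lerDl sumr_ge0 // => i _; case: (K i).
have S2 : \sum_i ts i <= ts j * d%:R.
  apply: le_trans (ler_sum _ (fun i _ => tsj i)) _.
  by rewrite sumr_const card_ord mulr_natr.
have [t0j Hj' _] := K j.
have S0 : 0 <= \sum_i ts i := le_trans t0j S1.
apply/andP; split.
  rewrite /g -/(ts j) Hj'.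
  have -> : w j * (phi (ts j * d%:R) / (u * w j)) = phi (ts j * d%:R) / u.
    by field; apply/andP; split; apply: lt0r_neq0.
  apply: ler_wpM2r; first by rewrite invr_ge0 ltW.
  have XX := mono_le Hd S0 S2. exact XX.
rewrite ler_pdivrMr // mulrC -Hj'.
have XX := mono_le Hd t0j S1. exact XX.
Unshelve. all: by end_near.
Qed.
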